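(* Let $G=(V,E)$ be a finite Eulerian graph (every vertex has even degree). For $\underline{r}=(r_v)_{v\in V}\in\mathbb{Z}^V$ let $\varepsilon_{\underline{r}}(G)$ be the number of orientations of $G$ in which every vertex $v$ has in-degree exactly $r_v$. Then $\varepsilon_{\underline{r}}(G)$ is maximal (over all $\underline{r}\in\mathbb{Z}^V$) when $r_v=d_G(v)/2$ for every vertex $v$; that is, $\varepsilon_{\underline{r}}(G)\leq \varepsilon(G)$ for every $\underline{r}\in\mathbb{Z}^V$, where $\varepsilon(G)$ is the number of Eulerian orientations of $G$.
   Context: An Eulerian orientation is an orientation in which every vertex has in-degree equal to out-degree, i.e. in-degree $d_G(v)/2$ at each vertex $v$. *)

(* Defs.v *)
From mathcomp Require Import all_boot all_order all_algebra.
Set Implicit Arguments. Unset Strict Implicit. Unset Printing Implicit Defensive.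

(* A finite (multi)graph: vertex type V, edge type E, each edge e has
   endpoints (ends e).1 and (ends e).2 (loops and parallel edges allowed). *)

Section Graph.
Variables (V E : finType) (ends : E -> V * V).

(* degree: each endpoint occurrence counts once, so a loop counts twice *)
Definition deg (v : V) : nat :=
  #|[set e : E | (ends e).1 == v]| + #|[set e : E | (ends e).2 == v]|.

Definition eulerian_graph : Prop := forall v : V, ~~ odd (deg v).

Definition head (o : {ffun E -> bool}) (e : E) : V :=
  if o e then (ends e).2 else (ends e).1.

Definition indeg (o : {ffun E -> bool}) (v : V) : nat :=
  #|[set e : E | head o e == v]|.

Definition n_orient (r : V -> int) : nat :=
  #|[set o : {ffun E -> bool} | [forall v : V, Posz (indeg o v) == r v]]|.

Definition n_eulerian_orient : nat :=
  #|[set o : {ffun E -> bool} | [forall v : V, indeg o v == (deg v)./2]]|.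

End Graph.

(* Main.v *)
Require Import Defs.
From mathcomp Require Import all_boot all_order all_algebra zify.
Import Order.TTheory GRing.Theory Num.Theory.
Set Implicit Arguments. Unset Strict Implicit. Unset Printing Implicit Defensive.

Section Count.
Variables (V E : finType) (ends : E -> V * V).

Definition ind (F : {set E}) (o : {ffun E -> bool}) (v : V) : nat :=
  \sum_(e in F) (Defs.head ends o e == v).
Definition dg (F : {set E}) (v : V) : nat :=
  \sum_(e in F) (((ends e).1 == v) + ((ends e).2 == v)).
Definition supp (X : {set E}) (o : {ffun E -> bool}) := [forall e, o e ==> (e \in X)].
Definition restr (X : {set E}) (o : {ffun E -> bool}) : {ffun E -> bool} :=
  [ffun e => (e \in X) && o e].
Definition flip (X : {set E}) (o : {ffun E -> bool}) : {ffun E -> bool} :=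
  [ffun e => if e \in X then ~~ o e else o e].
Definition join (a b : {ffun E -> bool}) : {ffun E -> bool} := [ffun e => a e || b e].
Definition S (F : {set E}) (r : V -> int) :=
  [set o | supp F o & [forall v, (ind F o v)%:Z%R == r v]].
Definition B (H : {set E}) :=
  [set a | supp H a & [forall v, (ind H a v).*2 == dg H v]].
Definition r0 (F : {set E}) : V -> int := fun v => ((dg F v)./2)%:Z%R.

Lemma split_sum (f : E -> nat) (H F : {set E}) : H \subset F ->
  \sum_(e in F) f e = \sum_(e in H) f e + \sum_(e in F :\: H) f e.
Proof. by move=> HF; rewrite (big_setID H) /=; move/setIidPr: HF => ->. Qed.

Lemma ind_restr (H : {set E}) o v : ind H (restr H o) v = ind H o v.
Proof. by apply: eq_bigr => e eH; rewrite /Defs.head ffunE eH. Qed.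

Lemma ind_flip_in (H : {set E}) o v : ind H (flip H o) v + ind H o v = dg H v.
Proof.
rewrite /ind /dg -big_split; apply: eq_bigr => e eH; rewrite /Defs.head ffunE eH.
by case: (o e) => //=; rewrite addnC.
Qed.

Lemma ind_flip_out (F H : {set E}) o v : ind (F :\: H) (flip H o) v = ind (F :\: H) o v.
Proof.
apply: eq_bigr => e; rewrite inE => /andP[eH _]; rewrite /Defs.head ffunE.
by rewrite (negbTE eH).
Qed.

Lemma suppP (X : {set E}) (o : {ffun E -> bool}) : reflect (forall e, o e -> e \in X) (supp X o).
Proof.
apply: (iffP forallP) => h e; first by move/(implyP (h e)).
by apply/implyP; apply: h.
Qed.

Lemma restr_join (H K : {set E}) (a b : {ffun E -> bool}) : [disjoint H & K] -> supp H a -> supp K b ->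
  restr H (join a b) = a /\ restr K (join a b) = b.
Proof.
move=> dHK /suppP sa /suppP sb; split; apply/ffunP => e; rewrite !ffunE.
- case ae: (a e); first by rewrite (sa _ ae).
  case be: (b e) => /=; last by rewrite andbF.
  have eK := sb _ be; case eH: (e \in H) => //.
  by rewrite (disjointFr dHK eH) in eK.
- case be: (b e); first by rewrite (sb _ be) orbT.
  case ae: (a e) => /=; last by rewrite andbF.
  have eH := sa _ ae; case eK: (e \in K) => //.
  by rewrite (disjointFr dHK eH) in eK.
Qed.

Lemma card_split (H K : {set E}) (p q : pred {ffun E -> bool}) : [disjoint H & K] ->
  #|[set o | supp (H :|: K) o & p (restr H o) && q (restr K o)]| =
  #|[set a | supp H a & p a]| * #|[set b | supp K b & q b]|.
Proof.
move=> dHK; rewrite -cardsX.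
set A := [set a | supp H a & p a]; set Bs := [set b | supp K b & q b].
have inj : {in setX A Bs &, injective (fun ab => join ab.1 ab.2)}.
  move=> [a b] [a' b']; rewrite !in_setX !inE.
  move=> /andP[/andP[Ha _] /andP[Hb _]] /andP[/andP[Ha' _] /andP[Hb' _]] /= eq.
  case: (restr_join dHK Ha Hb) => e1 e2; case: (restr_join dHK Ha' Hb') => e1' e2'.
  by congr pair; [rewrite -e1 eq e1' | rewrite -e2 eq e2'].
rewrite -(card_in_imset inj); apply: eq_card => o; rewrite inE.
apply/idP/imsetP.
- move=> /andP[so /andP[po qo]]; exists (restr H o, restr K o).
    apply/setXP; rewrite !inE po qo !andbT; split; apply/suppP => e;
    by rewrite ffunE => /andP[].
  apply/ffunP => e; rewrite /join !ffunE /=.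
  case oe: (o e); last by rewrite !andbF.
  by move/suppP: so => /(_ e oe); rewrite inE => /orP[] ->; rewrite ?orbT.
- move=> [[a b]]; rewrite in_setX !inE => /andP[/andP[Ha pa] /andP[Hb qb]] ->.
  case: (restr_join dHK Ha Hb) => -> ->; rewrite pa qb andbT.
  rewrite andbT /=; apply/suppP => e; rewrite ffunE inE => /orP[ae|be].
  + by rewrite (suppP _ _ Ha e ae).
  + by rewrite (suppP _ _ Hb e be) orbT.
Qed.


Lemma card_sum (T : finType) (A : {set T}) (c : pred T) :
  #|[set x in A | c x]| = \sum_(x in A) c x.
Proof.
rewrite (eq_bigr (fun x => if c x then 1 else 0)); last by move=> x _; case: (c x).
rewrite -big_mkcondr sum1_card; apply: eq_card => x; by rewrite !inE.
Qed.

Lemma flip_inj o : injective (fun H => flip H o).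
Proof.
move=> H H' /= eq; apply/setP => e; have := congr1 (fun f : {ffun E -> bool} => f e) eq.
by rewrite !ffunE; case: (e \in H); case: (e \in H'); case: (o e).
Qed.

Lemma supp_flip (F H : {set E}) o : H \subset F -> supp F (flip H o) = supp F o.
Proof.
move=> HF; apply/suppP/suppP => h e; rewrite ?ffunE.
- case eH: (e \in H); first by rewrite (subsetP HF e eH).
  by move=> oe; apply: h; rewrite ffunE eH.
- case eH: (e \in H); first by rewrite (subsetP HF e eH).
  by apply: h.
Qed.

Lemma sq_sum F r : #|S F r| * #|S F r| =
  \sum_(H in powerset F) #|[set o in S F r | flip H o \in S F r]|.
Proof.
have step : forall o, o \in S F r ->
    #|S F r| = \sum_(H in powerset F) (flip H o \in S F r).
  move=> o oS; rewrite -card_sum -(card_imset _ (@flip_inj o)).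
  apply: eq_card => o2; apply/idP/imsetP.
  - move=> o2S; have fe : flip [set e | o e != o2 e] o = o2.
      by apply/ffunP => e; rewrite !ffunE inE; case: (o e); case: (o2 e).
    exists [set e | o e != o2 e] => //.
    rewrite inE powersetE fe o2S andbT; apply/subsetP => e; rewrite inE.
    move: oS o2S; rewrite !inE => /andP[/suppP s1 _] /andP[/suppP s2 _].
    by case oe: (o e); case o2e: (o2 e) => // _; [apply: s1|apply: s2].
  - by move=> [H]; rewrite inE => /andP[_ h] ->.
rewrite -sum_nat_const (eq_bigr _ step) exchange_big /=.
by apply: eq_bigr => H _; rewrite card_sum.
Qed.

Lemma setUDK (H F : {set E}) : H \subset F -> H :|: (F :\: H) = F.
Proof.
move=> HF; apply/setP => e; rewrite !inE.
by case eH: (e \in H) => //=; rewrite (subsetP HF e eH).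
Qed.

Lemma disjD (H F : {set E}) : [disjoint H & F :\: H].
Proof. by rewrite -setI_eq0; apply/eqP/setP => e; rewrite !inE; case: (e \in H). Qed.

Lemma P_card (F : {set E}) (r : V -> int) (H : {set E}) : H \subset F ->
  #|[set o in S F r | flip H o \in S F r]| =
  #|B H| * #|S (F :\: H) (fun v => (r v - ((dg H v)./2)%:Z)%R)|.
Proof.
move=> HF; rewrite /B /S -card_split ?disjD // setUDK //.
apply: eq_card => o; rewrite !inE supp_flip //.
have isp := fun o v => split_sum (fun e => (Defs.head ends o e == v) : nat) HF.
case: (supp F o) => //=.
apply/idP/idP.
- move=> /andP[/forallP h1 /forallP h2]; apply/andP; split; apply/forallP => v;
  rewrite ind_restr; move: (h1 v) (h2 v); rewrite /ind !isp -/(ind H _ v) -/(ind H _ v) -!/(ind (F :\: H) _ v) ind_flip_out;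
  have hd := ind_flip_in H o v.
  + move=> /eqP a1 /eqP a2; apply/eqP; rewrite -addnn; lia.
  + move=> /eqP a1 /eqP a2; apply/eqP.
    have -> : dg H v = (ind H o v).*2 by rewrite -addnn; lia.
    rewrite doubleK; lia.
- move=> /andP[/forallP h1 /forallP h2]; apply/andP; split; apply/forallP => v;
  move: (h1 v) (h2 v); rewrite !ind_restr /ind !isp -/(ind H _ v) -/(ind H _ v) -!/(ind (F :\: H) _ v) ?ind_flip_out;
  have hd := ind_flip_in H o v => /eqP a1 /eqP a2; apply/eqP;
  rewrite -a1 doubleK in a2; rewrite -addnn in a1; lia.
Qed.

Lemma flip0 o : flip set0 o = o.
Proof. by apply/ffunP => e; rewrite ffunE inE. Qed.

Lemma S_ext (F : {set E}) (r r' : V -> int) : (forall v, r v = r' v) -> S F r = S F r'.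
Proof.
move=> h; apply/setP => o; rewrite !inE; congr (_ && _).
by apply: eq_forallb => v; rewrite h.
Qed.

Lemma main_step (F : {set E}) :
  (forall v, ~~ odd (dg F v)) ->
  (exists o, forall v, (ind F o v).*2 = dg F v) ->
  (forall H : {set E}, H \subset F -> H != set0 -> (forall v, ~~ odd (dg (F :\: H) v)) ->
     forall r, #|S (F :\: H) r| <= #|S (F :\: H) (r0 (F :\: H))|) ->
  forall r, #|S F r| <= #|S F (r0 F)|.
Proof.
move=> Fev [o0 ho0] IH r.
have ypos : 0 < #|S F (r0 F)|.
  apply/card_gt0P; exists (restr F o0); rewrite inE; apply/andP; split.
    by apply/suppP => e; rewrite ffunE => /andP[].
  by apply/forallP => v; rewrite ind_restr /r0 -ho0 doubleK.
have sx := sq_sum F r; have sy := sq_sum F (r0 F).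
have F0 : set0 \in powerset F by rewrite powersetE sub0set.
rewrite (bigD1 set0) //= in sx; rewrite (bigD1 set0) //= in sy.
have P0 : forall r', [set o in S F r' | flip set0 o \in S F r'] = S F r'.
  by move=> r'; apply/setP => o; rewrite inE flip0 andbb.
rewrite !P0 in sx sy.
have le : \sum_(H in powerset F | H != set0) #|[set o in S F r | flip H o \in S F r]|
  <= \sum_(H in powerset F | H != set0) #|[set o in S F (r0 F) | flip H o \in S F (r0 F)]|.
  apply: leq_sum => H /andP[]; rewrite powersetE => HF Hn.
  rewrite !P_card //.
  case: (set_0Vmem (B H)) => [->|[a]]; first by rewrite cards0.
  rewrite inE => /andP[_ /forallP ha].
  apply: leq_mul => //.
  have dsp : forall v, dg F v = dg H v + dg (F :\: H) v.
    by move=> v; rewrite /dg (split_sum _ HF).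
  have ev : forall v, ~~ odd (dg (F :\: H) v).
    move=> v; have := Fev v; rewrite dsp -(eqP (ha v)) oddD odd_double.
    by [].
  apply: leq_trans (IH H HF Hn ev _) _; apply: eq_leq.
  have -> : S (F :\: H) (r0 (F :\: H)) = S (F :\: H) (fun v => (r0 F v - ((dg H v)./2)%:Z)%R) => //.
  apply: S_ext => v.
  rewrite /r0 dsp -(eqP (ha v)) -(even_halfK (ev v)) -doubleD !doubleK.
  by rewrite PoszD addrAC subrr add0r.
move: sx sy le ypos.
move: (\sum_(_ in _ | _) _) (\sum_(_ in _ | _) _) #|S F r| #|S F (r0 F)| => a b x y.
move=> h1 h2 h3 h4.
case: (leqP x y) => // lt.
have h5 : (y + 1) * (y + 1) <= x * x by apply: leq_mul; lia.
have h6 : (y + 1) * x <= x * x by apply: leq_mul; lia.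
nia.
Qed.

Lemma main_count (Hex : forall F : {set E}, (forall v, ~~ odd (dg F v)) ->
      exists o, forall v, (ind F o v).*2 = dg F v) n :
  forall F : {set E}, #|F| <= n -> (forall v, ~~ odd (dg F v)) ->
  forall r, #|S F r| <= #|S F (r0 F)|.
Proof.
elim: n => [|n IHn] F hF Fev.
  apply: main_step => // [|H HF Hn]; first exact: Hex.
  have := subset_leq_card HF; rewrite leqn0 in hF; rewrite (eqP hF) leqn0 cards_eq0.
  by rewrite (negbTE Hn).
apply: main_step => // [|H HF Hn ev r]; first exact: Hex.
apply: IHn => //.
have : 0 < #|H| by rewrite card_gt0.
have := cardsID H F; move/setIidPr: HF => ->; lia.
Qed.

End Count.

Section Exist.
Variables (V E : finType).

Lemma sumD1 (f : E -> nat) (F : {set E}) e1 : e1 \in F ->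
  \sum_(e in F) f e = f e1 + \sum_(e in F :\ e1) f e.
Proof.
move=> e1F; rewrite (bigD1 e1) //=; congr (_ + _).
by apply: eq_bigl => e; rewrite !inE andbC.
Qed.

Lemma exist_eul n : forall (ends : E -> V * V) (F : {set E}), #|F| <= n ->
  (forall v, ~~ odd (dg ends F v)) ->
  exists o, forall v, (ind ends F o v).*2 = dg ends F v.
Proof.
have empty : forall (ends : E -> V * V),
    exists o, forall v, (ind ends set0 o v).*2 = dg ends set0 v.
  by move=> ends; exists [ffun=> false] => v; rewrite /ind /dg !big_set0.
elim: n => [|n IH] ends F hF ev.
  by move: hF; rewrite leqn0 cards_eq0 => /eqP ->.
case: (set_0Vmem F) => [->|[e1 e1F]] //.
case E1: (ends e1) => [v a].
case: (boolP (v == a)) => lp.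
  have hF' : #|F :\ e1| <= n by move: hF; rewrite (cardsD1 e1) e1F.
  have ev' : forall x, ~~ odd (dg ends (F :\ e1) x).
    move=> x; have := ev x; rewrite /dg (sumD1 _ e1F) /= E1 /= (eqP lp) addnn.
    by rewrite oddD odd_double.
  have [o ho] := IH ends _ hF' ev'; exists o => x; move: (ho x).
  rewrite /ind /dg !(sumD1 _ e1F) E1 /= -(eqP lp) => h.
  have -> : Defs.head ends o e1 = v by rewrite /Defs.head E1 -(eqP lp); case: (o e1).
  rewrite -!addnn in h *; lia.
case: (pickP [pred e | (e \in F :\ e1) && (((ends e).1 == v) || ((ends e).2 == v))])
   => [e2 /andP[e2F inc] | none]; last first.
  exfalso; have := ev v; rewrite /dg (sumD1 _ e1F) big1 /=.
    by rewrite E1 /= eqxx eq_sym (negbTE lp).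
  move=> e eF; have := none e; rewrite /= eF /= => /norP[/negbTE -> /negbTE ->].
  by [].
move: e2F; rewrite !inE => /andP[e21 e2F].
case E2: (ends e2) inc => [p2 q2] /= inc.
pose b := if p2 == v then q2 else p2.
pose ends' := fun e => if e == e1 then (a, b) else ends e.
have e1F' : e1 \in F :\ e2 by rewrite !inE eq_sym e21.
have hF' : #|F :\ e2| <= n by move: hF; rewrite (cardsD1 e2) e2F.
have dgF : forall x, dg ends F x = dg ends' (F :\ e2) x + (v == x).*2.
  move=> x; rewrite /dg (sumD1 _ e2F) (sumD1 _ e1F') (sumD1 (fun e => _) e1F').
  have -> : \sum_(e in F :\ e2 :\ e1) (((ends' e).1 == x) + ((ends' e).2 == x)) =
            \sum_(e in F :\ e2 :\ e1) (((ends e).1 == x) + ((ends e).2 == x)).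
    apply: eq_bigr => e; rewrite !inE => /andP[ne1 _].
    by rewrite /ends' (negbTE ne1).
  rewrite /ends' eqxx E1 E2 /= /b -!addnn.
  case: (boolP (p2 == v)) => hp; first by rewrite (eqP hp); lia.
  by move: inc; rewrite (negbTE hp) /= => /eqP ->; lia.
have ev' : forall x, ~~ odd (dg ends' (F :\ e2) x).
  move=> x; have := ev x; rewrite dgF oddD odd_double.
  by rewrite addbF.
have [o' ho'] := IH ends' _ hF' ev'.
pose o := [ffun e => if e == e1 then ~~ o' e1 else
                     if e == e2 then (o' e1 == (p2 == v)) else o' e].
exists o => x; rewrite dgF -(ho' x).
rewrite /ind (sumD1 _ e2F) (sumD1 _ e1F') (sumD1 (fun e => _) e1F').
have -> : \sum_(e in F :\ e2 :\ e1) (Defs.head ends o e == x) =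
          \sum_(e in F :\ e2 :\ e1) (Defs.head ends' o' e == x).
  apply: eq_bigr => e; rewrite !inE => /andP[ne1 /andP[ne2 _]].
  by rewrite /Defs.head /ends' /o ffunE (negbTE ne1) (negbTE ne2).
rewrite /Defs.head /ends' /o !ffunE eqxx (negbTE e21) eqxx E1 E2 /= /b -!addnn.
case: (boolP (p2 == v)) => hp; case: (o' e1) => /=.
- lia.
- rewrite (eqP hp); lia.
- lia.
- move: inc; rewrite (negbTE hp) /= => /eqP Eq2; rewrite Eq2; lia.
Qed.

End Exist.

Lemma indeg_ind (V E : finType) (ends : E -> V * V) o v :
  indeg ends o v = ind ends setT o v.
Proof. by rewrite /indeg /ind -card_sum; apply: eq_card => e; rewrite !inE. Qed.

Lemma deg_dg (V E : finType) (ends : E -> V * V) v :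
  deg ends v = dg ends setT v.
Proof.
rewrite /deg /dg big_split /= -!card_sum.
by congr (_ + _); apply: eq_card => e; rewrite !inE.
Qed.

Theorem theorem1p11 (V E : finType) (ends : E -> V * V) :
  eulerian_graph ends ->
  forall r : V -> int, n_orient ends r <= n_eulerian_orient ends.
Proof.
move=> Heul r.
have Hex : forall F : {set E}, (forall v, ~~ odd (dg ends F v)) ->
    exists o, forall v, (ind ends F o v).*2 = dg ends F v.
  by move=> F; apply: (@exist_eul V E #|F| ends F (leqnn _)).
have ev : forall v, ~~ odd (dg ends setT v) by move=> v; rewrite -deg_dg; apply: Heul.
have := main_count Hex (leqnn #|[set: E]|) ev r.
have sT : forall o : {ffun E -> bool}, supp setT o by move=> o; apply/forallP => e; rewrite inE implybT.
have -> : n_orient ends r = #|S ends setT r|.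
  apply: eq_card => o; rewrite !inE sT /=.
  by apply: eq_forallb => v; rewrite indeg_ind.
have -> : n_eulerian_orient ends = #|S ends setT (r0 ends setT)|.
  apply: eq_card => o; rewrite !inE sT /=.
  by apply: eq_forallb => v; rewrite indeg_ind deg_dg /r0 eqz_nat.
by [].
Qed.
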